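(* Let $n \ge 1$ and let $L$ be an $n \times n$ Latin square with rows, columns and symbols indexed by $\{0,1,\dots,n-1\}$. Then $$\sum_{0 \le r_1 < r_2 \le n-1} d(r_1,r_2) = \frac{n^2(n^2-1)}{6},$$ where $d(r_1,r_2) = \sum_{s=0}^{n-1} \lvert \mathrm{pos}(r_1,s) - \mathrm{pos}(r_2,s) \rvert$.
   Context: An $n \times n$ Latin square is an $n\times n$ array with entries in $\{0,\dots,n-1\}$ in which each symbol occurs exactly once in each row and exactly once in each column. Rows and columns are indexed by $\{0,\dots,n-1\}$. For a row $r$ and a symbol $s$, $\mathrm{pos}(r,s) \in \{0,\dots,n-1\}$ denotes the column in which symbol $s$ appears in row $r$. The absolute value $\lvert \mathrm{pos}(r_1,s) - \mathrm{pos}(r_2,s)\rvert$ is taken as ordinary integers. *)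

(* Defs.v *)
From mathcomp Require Import all_boot all_order all_algebra.
Set Implicit Arguments. Unset Strict Implicit. Unset Printing Implicit Defensive.

Definition latin_square (n : nat) (L : 'I_n -> 'I_n -> 'I_n) : Prop :=
  (forall r, injective (L r)) /\ (forall c, injective (fun r => L r c)).

(* pos r s : the column in which symbol s appears in row r (0 if none,
   which never happens for a Latin square). *)
Definition pos (n : nat) (L : 'I_n -> 'I_n -> 'I_n) (r s : 'I_n) : nat :=
  match [pick c | L r c == s] with Some c => nat_of_ord c | None => 0%N end.

Definition dist_rows (n : nat) (L : 'I_n -> 'I_n -> 'I_n) (r1 r2 : 'I_n) : nat :=
  \sum_(s < n) absz (Posz (pos L r1 s) - Posz (pos L r2 s))%R.

(* Main.v *)
Require Import Defs.
From mathcomp Require Import all_boot all_order all_algebra zify.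
Import GRing.Theory Num.Theory.

Lemma sum_id2 n : 2 * (\sum_(i < n) (i : nat)) = n * n.-1.
Proof.
elim: n => [|n IH]; first by rewrite big_ord0.
rewrite big_ord_recr /= mulnDr IH; case: n {IH} => //= n; nia.
Qed.

Lemma sum_rev n : 2 * (\sum_(i < n) (n - i)) = n * n.+1.
Proof.
have E : \sum_(i < n) (n - i) + \sum_(i < n) (i : nat) = n * n.
  rewrite -big_split /= (eq_bigr (fun _ => n)); last by move=> i _; rewrite subnK // ltnW.
  by rewrite sum_nat_const card_ord.
have := sum_id2 n. case: n E => [|n] E H; [by rewrite big_ord0 | simpl in H; move: E H; set s1 := \sum_(i < _) (_ - _); set s2 := \sum_(i < _) (i:nat); nia].
Qed.

Lemma distD n : 3 * (\sum_(i < n) \sum_(j < n) absz (Posz i - Posz j)%R) = n ^ 3 - n.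
Proof.
elim: n => [|n IH]; first by rewrite big_ord0.
have A : \sum_(i < n) absz (Posz i - Posz n)%R = \sum_(i < n) (n - i).
  apply: eq_bigr => i _. have := ltn_ord i. lia.
have B : \sum_(j < n) absz (Posz n - Posz j)%R = \sum_(i < n) (n - i).
  apply: eq_bigr => i _. have := ltn_ord i. lia.
rewrite big_ord_recr /= big_ord_recr /=. under eq_bigr do rewrite big_ord_recr /=. rewrite big_split /= A B subrr /=. move: IH; set D := \sum_(i < n) _. set S := \sum_(i < n) _.
have := sum_rev n. rewrite -/S. nia.
Qed.

Lemma half n (f : 'I_n -> 'I_n -> nat) :
  (forall i j, f i j = f j i) -> (forall i, f i i = 0) ->
  \sum_(i < n) \sum_(j < n) f i j = 2 * \sum_(i < n) \sum_(j < n | (i < j)%N) f i j.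
Proof.
move=> fsym f0.
have E (i : 'I_n) : \sum_(j < n) f i j = \sum_(j < n | (i < j)%N) f i j + \sum_(j < n | (j < i)%N) f i j.
  rewrite (bigID (fun j : 'I_n => (i < j)%N)) /=; congr (_ + _).
  rewrite big_mkcond [RHS]big_mkcond; apply: eq_bigr => j _.
  case: ltngtP => h //=. by move/val_inj: h => ->; rewrite f0.
rewrite (eq_bigr _ (fun i _ => E i)) big_split /= mul2n -addnn; congr (_ + _).
under eq_bigr do rewrite big_mkcond.
rewrite exchange_big /=; apply: eq_bigr => i _.
rewrite [RHS]big_mkcond; apply: eq_bigr => j _ /=. by rewrite fsym.
Qed.

Lemma reidx n (g : 'I_n -> 'I_n) (F : 'I_n -> 'I_n -> nat) : injective g ->
  \sum_i \sum_j F (g i) (g j) = \sum_i \sum_j F i j.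
Proof.
move=> gi; rewrite [RHS](reindex_inj gi) /=; apply: eq_bigr => i _.
by rewrite [RHS](reindex_inj gi).
Qed.

Lemma pos_inv n (L : 'I_n -> 'I_n -> 'I_n) (HL : latin_square L) (s : 'I_n) :
  exists g : 'I_n -> 'I_n, injective g /\ forall r, pos L r s = g r.
Proof.
case: HL => Hr Hc.
exists (fun r => invF (Hr r) s); split.
  move=> r1 r2 e; apply: (Hc (invF (Hr r1) s)) => /=.
  by rewrite {2}e !f_invF.
move=> r; rewrite /pos; case: pickP => [c /eqP Hc'|H].
  by congr val; apply: (Hr r); rewrite f_invF.
by have := H (invF (Hr r) s); rewrite f_invF eqxx.
Qed.

Theorem lemma1 (n : nat) (L : 'I_n -> 'I_n -> 'I_n) :
  (1 <= n)%N -> latin_square L ->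
  ((\sum_(r1 < n) \sum_(r2 < n | (r1 < r2)%N) dist_rows L r1 r2)%:R : rat)
  = ((n ^ 2 * (n ^ 2 - 1))%:R / 6%:R)%R.
Proof.
move=> n1 HL.
have E : \sum_(r1 < n) \sum_(r2 < n | (r1 < r2)%N) dist_rows L r1 r2 =
  \sum_(s < n) \sum_(r1 < n) \sum_(r2 < n | (r1 < r2)%N)
     absz (Posz (pos L r1 s) - Posz (pos L r2 s))%R.
  rewrite exchange_big /=; apply: eq_bigr => r1 _.
  by rewrite /dist_rows exchange_big.
have H s : 6 * (\sum_(r1 < n) \sum_(r2 < n | (r1 < r2)%N)
     absz (Posz (pos L r1 s) - Posz (pos L r2 s))%R) = n ^ 3 - n.
  have [g [gi gE]] := @pos_inv n L HL s.
  rewrite -distD -(@reidx n g (fun i j : 'I_n => absz (Posz i - Posz j)%R) gi).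
  rewrite half; last 2 first.
  - move=> i j /=. lia.
  - move=> i /=. by rewrite subrr.
  rewrite mulnA; congr (_ * _); apply: eq_bigr => i _; apply: eq_bigr => j _.
  by rewrite !gE.
have HT : 6 * (\sum_(r1 < n) \sum_(r2 < n | (r1 < r2)%N) dist_rows L r1 r2)
   = n ^ 2 * (n ^ 2 - 1).
  rewrite E big_distrr /= (eq_bigr _ (fun s _ => H s)) sum_nat_const card_ord.
  rewrite mulnBr mulnBr muln1 -!expnS -expnD mulnn.
by [].
rewrite -HT natrM [X in (X / _)%R]mulrC mulfK //.
Qed.
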